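(* Consider SEMO or GSEMO on \textsc{OneMinMax} with a parent selection mechanism such that, in every iteration in which the population does not yet cover the Pareto front, the probability of selecting a good individual is at least $p_{\mathrm{good}}$. Then the expected time to find all solutions of the Pareto front of \textsc{OneMinMax} is $O((n\log n)/p_{\mathrm{good}})$.
   Context: Search space $\{0,1\}^n$; objectives maximised. $\textsc{OneMinMax}(x)=(\sum_ix_i,\,n-\sum_ix_i)$; every point is Pareto optimal, Pareto front $F^*=\{(i,n-i):0\le i\le n\}$. Dominance: $y$ dominates $x$ if $f_i(y)\ge f_i(x)$ for all $i$, strictly for some $i$; weakly dominates if $\ge$ in all. SEMO/GSEMO with a parent selection mechanism: start with uniform random $s$, $P=\{s\}$. Each iteration: choose a parent $s\in P$ by the mechanism; create $s'$ by flipping one uniformly random bit (SEMO) or each bit independently with probability $1/n$ (GSEMO); if $s'$ is not dominated by any member of $P$, add it and remove all members weakly dominated by $s'$. Time = number of iterations until $f(P)=F^*$. Good: w.r.t. $P$, $x\in P$ is good if some Hamming neighbour $y$ of $x$ satisfies $f(y)\notin f(P)$. *)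

(* Defs.v *)
From HB Require Import structures.
From mathcomp Require Import all_boot all_order all_algebra.
From mathcomp Require Import all_classical all_reals all_analysis.
Set Implicit Arguments. Unset Strict Implicit. Unset Printing Implicit Defensive.
Import Order.TTheory GRing.Theory Num.Theory.
Local Open Scope ring_scope.

Definition bs (n : nat) := {ffun 'I_n -> bool}.

Definition ones n (x : bs n) : nat := #|[set i | x i]|.

Definition omm n (x : bs n) : nat * nat := (ones x, (n - ones x)%N).

Definition weakdom n (f : bs n -> nat * nat) (y x : bs n) : bool :=
  ((f x).1 <= (f y).1)%N && ((f x).2 <= (f y).2)%N.
Definition dom n (f : bs n -> nat * nat) (y x : bs n) : bool :=
  weakdom f y x && (((f x).1 < (f y).1)%N || ((f x).2 < (f y).2)%N).

Definition update n (P : {set bs n}) (y : bs n) : {set bs n} :=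
  if [exists z in P, dom (@omm n) z y] then P
  else y |: [set z in P | ~~ weakdom (@omm n) y z].

Definition covers n (P : {set bs n}) : bool :=
  [forall i : 'I_n.+1, exists x in P, omm x == pair (val i) (n - val i)%N ].

Definition hamming n (x y : bs n) : nat := #|[set i | x i != y i]|.

Definition good n (P : {set bs n}) (x : bs n) : bool :=
  [exists y : bs n, (hamming x y == 1%N) &&
     ~~ [exists z in P, omm z == omm y]].

Inductive algo := SEMO | GSEMO.

Definition mutprob (R : realType) (A : algo) n (x y : bs n) : R :=
  match A with
  | SEMO => if hamming x y == 1%N then n%:R^-1 else 0
  | GSEMO => (n%:R^-1) ^+ (hamming x y) * (1 - n%:R^-1) ^+ (n - hamming x y)
  end.

(* A run is described by the initial point s0 and the sequence of records
   (parent, offspring) of the iterations performed so far.  The population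
   after the history h: *)
Definition pop n (s0 : bs n) (h : seq (bs n * bs n)) : {set bs n} :=
  foldl (fun P r => update P r.2) [set s0] h.

(* A parent selection mechanism: given the full history (s0, h), the
   probability sel s0 h x of choosing x as parent.  It may depend on the
   whole history (not only on the current population). *)
Definition valid_sel (R : realType) n
    (sel : bs n -> seq (bs n * bs n) -> bs n -> R) : Prop :=
  forall s0 h,
    (forall x, 0 <= sel s0 h x) /\
    (forall x, x \notin pop s0 h -> sel s0 h x = 0) /\
    \sum_(x in pop s0 h) sel s0 h x = 1.

Definition good_sel (R : realType) n
    (sel : bs n -> seq (bs n * bs n) -> bs n -> R) (p : R) : Prop :=
  forall s0 h, ~~ covers (pop s0 h) ->
    p <= \sum_(x in pop s0 h | good (pop s0 h) x) sel s0 h x.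

Definition run_prob (R : realType) (A : algo) n
    (sel : bs n -> seq (bs n * bs n) -> bs n -> R)
    (s0 : bs n) (h : seq (bs n * bs n)) : R :=
  (2%:R ^+ n)^-1 *
  \prod_(i < size h)
     (sel s0 (take i h) (nth (s0, s0) h i).1 *
      mutprob R A (nth (s0, s0) h i).1 (nth (s0, s0) h i).2).

(* P(T > t): none of the populations P_0, ..., P_t covers the front. *)
Definition tail_prob (R : realType) (A : algo) n
    (sel : bs n -> seq (bs n * bs n) -> bs n -> R) (t : nat) : R :=
  \sum_(s0 : bs n) \sum_(h : t.-tuple (bs n * bs n))
     (if [forall i : 'I_t.+1, ~~ covers (pop s0 (take i h))]
      then @run_prob R A n sel s0 h else 0).

(* E[T] <= B, with E[T] = sum_{t>=0} P(T > t) (tail-sum formula for a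
   nonnegative integer random variable; the series has nonnegative terms). *)
Definition expected_time_le (R : realType) (A : algo) n
    (sel : bs n -> seq (bs n * bs n) -> bs n -> R) (B : R) : Prop :=
  forall N : nat, \sum_(t < N) @tail_prob R A n sel t <= B.

(* Main.v *)
Require Import Defs.
From HB Require Import structures.
From mathcomp Require Import all_boot all_order all_algebra.
From mathcomp Require Import all_classical all_reals all_analysis.
From mathcomp Require Import zify ring lra.
Import Order.TTheory GRing.Theory Num.Theory.
Local Open Scope ring_scope.
Set Implicit Arguments. Unset Strict Implicit. Unset Printing Implicit Defensive.
Section Comb.
Variable n : nat.
Implicit Types x y z : bs n.

Lemma ones_le x : (ones x <= n)%N.
Proof. by rewrite /ones (leq_trans (max_card _)) // card_ord. Qed.

Definition flip x (i : 'I_n) : bs n := [ffun j => if j == i then ~~ x j else x j].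

Lemma hamming_flip x i : hamming x (flip x i) = 1%N.
Proof.
rewrite /hamming -(cards1 i); apply: eq_card => j.
rewrite !inE ffunE; case: (j =P i) => [->|_]; first by case: (x i).
by rewrite eqxx.
Qed.

Lemma ones_flip x i :
  ones (flip x i) = (if x i then (ones x).-1 else (ones x).+1)%N.
Proof.
rewrite /ones.
case Hx: (x i).
- have -> : [set j | x j] = i |: [set j | flip x i j].
    apply/setP => j; rewrite !inE ffunE; case: (j =P i) => [->|_]; by rewrite ?Hx ?eqxx.
  rewrite cardsU1 inE ffunE eqxx Hx /=. by [].
- have -> : [set j | flip x i j] = i |: [set j | x j].
    apply/setP => j; rewrite !inE ffunE; case: (j =P i) => [->|_]; by rewrite ?Hx ?eqxx.
  by rewrite cardsU1 inE Hx.
Qed.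

Lemma flip_inj x : injective (flip x).
Proof.
move=> i j /ffunP /(_ i); rewrite !ffunE eqxx.
case: (i =P j) => // _; by case: (x i).
Qed.

Lemma hamming1_flip x y : hamming x y = 1%N -> exists i, y = flip x i.
Proof.
rewrite /hamming => /eqP /cards1P [i Hi]; exists i.
apply/ffunP => j; rewrite ffunE.
have : (j \in [set i | x i != y i]) = (j \in [set i]) by rewrite Hi.
rewrite !inE.
case: (j =P i) => [->|_] H.
- by move: H; case: (x i); case: (y i).
- by move: H; case: (x j); case: (y j).
Qed.

Lemma card_zeros x : #|[set i | ~~ x i]| = (n - ones x)%N.
Proof.
have H := cardC [set i | x i]; rewrite card_ord in H.
have E : #|[set i | ~~ x i]| = #|[predC [set i | x i]]| by apply: eq_card => i; rewrite !inE.
rewrite /ones E; lia.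
Qed.

Lemma omm_eq y z : (omm z == omm y) = (ones z == ones y).
Proof.
rewrite /omm xpair_eqE; case: (ones z =P ones y) => [->|]; by rewrite ?eqxx.
Qed.

Lemma update_eq (P : {set bs n}) y :
  update P y = y |: [set z in P | ~~ weakdom (@omm n) y z].
Proof.
rewrite /update; case: ifP => // /existsP [z /andP [_]].
rewrite /dom /weakdom /omm /= => /andP [/andP [h1 h2] h3].
have := ones_le y; have := ones_le z. move: h1 h2 h3. lia.
Qed.

Lemma in_update (P : {set bs n}) y : y \in update P y.
Proof. by rewrite update_eq setU11. Qed.

Lemma cov_mono (P : {set bs n}) y k :
  [exists z in P, ones z == k] -> [exists z in update P y, ones z == k].
Proof.
move=> /existsP [z /andP [zP /eqP zk]]; apply/existsP.
case Hw: (weakdom (@omm n) y z).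
- exists y; rewrite in_update /=.
  move: Hw; rewrite /weakdom /omm /= => /andP [h1 h2].
  have := ones_le y; have := ones_le z; move: h1 h2; rewrite -zk => h1 h2 h3 h4; apply/eqP; lia.
- exists z; rewrite update_eq !inE zP Hw zk eqxx orbT //.
Qed.

End Comb.
Section Mut.
Variable R : realType.
Variable n : nat.
Hypothesis n1 : (1 <= n)%N.
Implicit Types x y z : bs n.

Definition qq : R := n%:R^-1 * (1 - n%:R^-1) ^+ n.-1.

Lemma invn_ge0 : 0 <= n%:R^-1 :> R.
Proof. by rewrite invr_ge0 ler0n. Qed.

Lemma invn_le1 : n%:R^-1 <= 1 :> R.
Proof. by rewrite invf_le1 ?ler1n ?ltr0n. Qed.

Lemma mut_ge0 A x y : 0 <= mutprob R A x y.
Proof.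
have h0 := invn_ge0; have h1 := invn_le1.
case: A => /=; first by case: ifP.
apply: mulr_ge0; apply: exprn_ge0 => //; by rewrite subr_ge0.
Qed.

Lemma mut_flip A x i : qq <= mutprob R A x (flip x i).
Proof.
have h0 := invn_ge0; have h1 := invn_le1.
rewrite /qq; case: A => /=; rewrite hamming_flip ?eqxx.
- rewrite ler_piMr // exprn_ile1 // ?subr_ge0 // lerBlDr lerDl //.
- by rewrite expr1 subn1.
Qed.

Lemma mut_sum A x : \sum_y mutprob R A x y <= 1.
Proof.
have h0 := invn_ge0; have h1 := invn_le1.
case: A => /=.
- rewrite -big_mkcond /= sumr_const.
  have Hc : (#|[pred y | hamming x y == 1%N]| <= n)%N.
    apply: (@leq_trans #|[set flip x i | i : 'I_n]|); last first.
      by rewrite (leq_trans (leq_imset_card _ _)) // card_ord.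
    apply: subset_leq_card; apply/fintype.subsetP => y; rewrite inE => /eqP /hamming1_flip [i ->].
    by apply: imset_f.
  rewrite -(mulr_natl (n%:R^-1) #|_|).
  apply: (le_trans (y := n%:R * n%:R^-1)); last by rewrite divff // pnatr_eq0 -lt0n.
  by apply: ler_wpM2r => //; rewrite ler_nat.
- set a : R := n%:R^-1.
  have E : \prod_(i < n) \sum_(c : bool) (if x i != c then a else 1 - a) = 1.
    apply: big1 => i _; rewrite big_bool /=; case: (x i) => /=; rewrite /a; lra.
  rewrite -[X in _ <= X]E bigA_distr_bigA /=; rewrite le_eqVlt; apply/orP; left; apply/eqP/eq_bigr => f _.
  rewrite (bigID (fun i => x i != f i)) /=.
  rewrite [X in _ = X * _](eq_bigr (fun=> a)); last by move=> i H; rewrite ifT.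
  rewrite [X in _ = _ * X](eq_bigr (fun=> 1 - a)); last by move=> i H; rewrite ifN.
  rewrite !prodr_const; congr (_ ^+ _ * _ ^+ _).
  + by rewrite /hamming; apply: eq_card => i; rewrite !inE.
  + have H := cardC [set i | x i != f i]; rewrite card_ord in H.
    have E2 : #|(fun i : 'I_n => ~~ (x i != f i))| = #|[predC [set i | x i != f i]]|.
      by apply: eq_card => i; rewrite !inE.
    rewrite /hamming E2; lia.
Qed.

End Mut.
Section Pot.
Variable R : realType.
Variable n : nat.
Hypothesis n1 : (1 <= n)%N.
Implicit Types x y z : bs n.
Implicit Types P : {set bs n}.

Definition term (k : nat) : R := (k.+1%:R)^-1 + ((n - k).+1%:R)^-1.
Definition uncov P (k : nat) : bool := ~~ [exists z in P, ones z == k].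
Definition cterm P k : R := if uncov P k then term k else 0.
Definition Phi P : R := \sum_(k < n.+1) cterm P k.
Definition Phimax : R := \sum_(k < n.+1) term k.

Lemma term_ge0 k : 0 <= term k.
Proof. by rewrite /term addr_ge0 // invr_ge0 ler0n. Qed.

Lemma cterm_ge0 P k : 0 <= cterm P k.
Proof. rewrite /cterm; case: ifP => // _; exact: term_ge0. Qed.

Lemma Phi_ge0 P : 0 <= Phi P.
Proof. apply: sumr_ge0 => k _; exact: cterm_ge0. Qed.

Lemma Phimax_ge0 : 0 <= Phimax.
Proof. apply: sumr_ge0 => k _; exact: term_ge0. Qed.

Lemma Phi_le_max P : Phi P <= Phimax.
Proof.
apply: ler_sum => k _; rewrite /cterm; case: ifP => // _; exact: term_ge0.
Qed.

Lemma Phi_update P y : Phi (update P y) + cterm P (ones y) <= Phi P.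
Proof.
have hy : (ones y < n.+1)%N by rewrite ltnS ones_le.
rewrite /Phi (bigD1 (Ordinal hy)) //= [X in _ <= X](bigD1 (Ordinal hy)) //=.
have -> : cterm (update P y) (ones y) = 0.
  rewrite /cterm /uncov ifN //; rewrite negbK; apply/existsP; exists y.
  by rewrite in_update eqxx.
rewrite add0r addrC lerD2r.
apply: ler_sum => k _; rewrite /cterm /uncov.
case: ifP => H1; last by case: ifP => // _; exact: term_ge0.
rewrite ifT //; apply: contra H1; exact: cov_mono.
Qed.

Lemma sum_inj_le (F : bs n -> R) (f : 'I_n -> bs n) (S : {set 'I_n}) :
  (forall y, 0 <= F y) -> injective f ->
  \sum_(i in S) F (f i) <= \sum_y F y.
Proof.
move=> F0 finj.
rewrite -(big_imset _ (h := f)); last by move=> i j _ _; exact: finj.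
rewrite [X in _ <= X](bigID (mem (f @: S))) /= lerDl.
by apply: sumr_ge0 => y _.
Qed.

Lemma good_drift A P x : good P x ->
  qq R n <= \sum_y mutprob R A x y * cterm P (ones y).
Proof.
move=> /existsP [y0 /andP [/eqP Hh Hn]].
have Hu : uncov P (ones y0).
  apply/negP => /existsP [z /andP [zP /eqP Hz]]; move/negP: Hn; apply.
  by apply/existsP; exists z; rewrite zP omm_eq Hz eqxx.
case: (hamming1_flip Hh) => i0 Hy0; subst y0.
set S := [set i | x i == x i0].
have i0S : i0 \in S by rewrite inE.
have Sgt0 : (0 < #|S|)%N by apply/card_gt0P; exists i0.
have Hk : forall i, i \in S -> ones (flip x i) = ones (flip x i0).
  by move=> i; rewrite inE ones_flip [in RHS]ones_flip => /eqP ->.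
have HT : (#|S|%:R^-1 : R) <= term (ones (flip x i0)).
  rewrite /term ones_flip; case Hx: (x i0).
  - have -> : #|S| = ones x.
      by rewrite /ones; apply: eq_card => i; rewrite !inE Hx.
    have : (0 < ones x)%N.
      by move: Sgt0; rewrite /ones; congr (_ < _)%N; apply: eq_card => i; rewrite !inE Hx.
    move=> hpos; rewrite prednK // lerDl invr_ge0 ler0n //.
  - have -> : #|S| = (n - ones x)%N.
      by rewrite -card_zeros; apply: eq_card => i; rewrite !inE Hx.
    have hlt : (ones x < n)%N.
      move: Sgt0; have -> : #|S| = (n - ones x)%N.
        by rewrite -card_zeros; apply: eq_card => i; rewrite !inE Hx.
      lia.
    have -> : (n - (ones x).+1).+1 = (n - ones x)%N by lia.
    by rewrite lerDr invr_ge0 ler0n.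
apply: (le_trans _ (sum_inj_le S _ (@flip_inj n x))); last first.
  by move=> y; apply: mulr_ge0; [exact: mut_ge0 | exact: cterm_ge0].
apply: (le_trans (y := \sum_(i in S) (qq R n * #|S|%:R^-1))).
  rewrite sumr_const -(mulr_natr (qq R n / _) #|S|) -mulrA mulVf ?mulr1 //.
  by rewrite pnatr_eq0 -lt0n.
apply: ler_sum => i iS.
rewrite /cterm Hk // ifT //.
apply: ler_pM; [ |by rewrite invr_ge0 ler0n | exact: mut_flip | exact: HT].
rewrite /qq; apply: mulr_ge0; first exact: invn_ge0.
by apply: exprn_ge0; rewrite subr_ge0 invn_le1.
Qed.

End Pot.
Section Drift.
Variable R : realType.
Variable A : algo.
Variable n : nat.
Hypothesis n1 : (1 <= n)%N.
Variable sel : bs n -> seq (bs n * bs n) -> bs n -> R.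
Variable p : R.
Hypothesis Hv : valid_sel sel.
Hypothesis Hg : good_sel sel p.

Lemma drift s0 h : ~~ covers (pop s0 h) ->
  \sum_(r : bs n * bs n) sel s0 h r.1 * mutprob R A r.1 r.2 *
      Phi R (update (pop s0 h) r.2) + p * qq R n <= Phi R (pop s0 h).
Proof.
move=> Hc; have Hgp := Hg Hc.
have [S0 [Sout Ssum]] := Hv s0 h.
set P := pop s0 h in Hc Hgp Sout Ssum *.
have Sall : \sum_x sel s0 h x = 1.
  rewrite (bigID (mem P)) /= Ssum big1 ?addr0 // => x xP; exact: Sout.
pose D := fun x : bs n => \sum_y mutprob R A x y * cterm R P (ones y).
have D0 : forall x, 0 <= D x.
  move=> x; apply: sumr_ge0 => y _; apply: mulr_ge0; [exact: (mut_ge0 _ n1) | exact: cterm_ge0].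
rewrite -(pair_bigA _ (fun x y => sel s0 h x * mutprob R A x y * Phi R (update P y))) /=.
have step1 : forall x, \sum_y sel s0 h x * mutprob R A x y * Phi R (update P y)
    <= sel s0 h x * (Phi R P - D x).
  move=> x.
  rewrite (eq_bigr (fun y => sel s0 h x * (mutprob R A x y * Phi R (update P y))));
    last by move=> y _; rewrite mulrA.
  rewrite -mulr_sumr; apply: ler_wpM2l; first exact: S0.
  apply: (le_trans (y := \sum_y mutprob R A x y * (Phi R P - cterm R P (ones y)))).
    apply: ler_sum => y _; apply: ler_wpM2l; first exact: (mut_ge0 _ n1).
    by rewrite lerBrDr; apply: Phi_update.
  rewrite (eq_bigr (fun y => mutprob R A x y * Phi R P - mutprob R A x y * cterm R P (ones y)));
    last by move=> y _; rewrite mulrBr.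
  rewrite sumrB -mulr_suml lerD2r /D.
  have := mut_sum R n1 A x; have := Phi_ge0 R P.
  move=> a b; rewrite -[X in _ <= X]mul1r; apply: ler_wpM2r => //.
apply: (le_trans (y := \sum_x sel s0 h x * (Phi R P - D x) + p * qq R n)).
  by rewrite lerD2r; apply: ler_sum => x _; apply: step1.
rewrite (eq_bigr (fun x => sel s0 h x * Phi R P - sel s0 h x * D x));
  last by move=> x _; rewrite mulrBr.
rewrite sumrB -mulr_suml Sall mul1r.
suff : p * qq R n <= \sum_x sel s0 h x * D x by move=> H; lra.
rewrite (bigID (fun x => (x \in P) && good P x)) /=.
apply: (le_trans (y := \sum_(x in P | good P x) sel s0 h x * D x + 0)); last first.
  by rewrite lerD2l; apply: sumr_ge0 => x _; apply: mulr_ge0.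
rewrite addr0.
apply: (le_trans (y := \sum_(x in P | good P x) sel s0 h x * qq R n)); last first.
  apply: ler_sum => x /andP [_ gx]; apply: ler_wpM2l => //; exact: (good_drift _ n1).
rewrite -mulr_suml; apply: ler_wpM2r => //.
rewrite /qq; apply: mulr_ge0; first exact: invn_ge0.
by apply: exprn_ge0; rewrite subr_ge0 (invn_le1 _ n1).
Qed.

End Drift.
Lemma sum_tuple_rcons (R : realType) (T : finType) t (F : seq T -> R) :
  \sum_(h : t.+1.-tuple T) F h = \sum_(h : t.-tuple T) \sum_(r : T) F (rcons h r).
Proof.
rewrite pair_bigA /=.
pose g := fun pr : t.-tuple T * T => [tuple of rcons pr.1 pr.2].
pose g' := fun u : t.+1.-tuple T =>
  ([tuple of belast (thead u) (behead_tuple u)], last (thead u) (behead u)).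
rewrite (reindex g) /=; last first.
  exists g' => [[h r] _ | u _].
  - rewrite /g /g' /=.
    have E := tuple_eta [tuple of rcons h r].
    move: (congr1 val E) => /= E2.
    set a := thead _ in E2 *.
    have := E2; rewrite lastI => /rcons_inj [E3 E4].
    by congr (_, _); [apply: val_inj; rewrite /= -E3 | rewrite -E4].
  - apply: val_inj; rewrite /g /g' /=.
    by rewrite -lastI [in RHS](tuple_eta u).
by [].
Qed.
Section Run.
Variable R : realType.
Variable A : algo.
Variable n : nat.
Hypothesis n1 : (1 <= n)%N.
Variable sel : bs n -> seq (bs n * bs n) -> bs n -> R.
Variable p : R.
Hypothesis Hv : valid_sel sel.
Hypothesis Hg : good_sel sel p.
Implicit Types (h : seq (bs n * bs n)) (r : bs n * bs n).

Definition Acov t (s0 : bs n) (h : seq (bs n * bs n)) : bool :=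
  [forall i : 'I_t.+1, ~~ covers (pop s0 (take i h))].

Definition G t : R := \sum_(s0 : bs n) \sum_(h : t.-tuple (bs n * bs n))
  (if Acov t s0 h then @run_prob R A n sel s0 h * Phi R (pop s0 h) else 0).

Lemma pop_rcons (s0 : bs n) h r : pop s0 (rcons h r) = update (pop s0 h) r.2.
Proof. by rewrite /pop foldl_rcons. Qed.

Lemma take_rcons_le (h : seq (bs n * bs n)) r i : (i <= size h)%N ->
  take i (rcons h r) = take i h.
Proof. by move=> hi; rewrite -cats1 takel_cat. Qed.

Lemma run_prob_rcons (s0 : bs n) h r :
  @run_prob R A n sel s0 (rcons h r) =
  @run_prob R A n sel s0 h * (sel s0 h r.1 * mutprob R A r.1 r.2).
Proof.
rewrite /run_prob size_rcons big_ord_recr /= -mulrA; congr (_ * (_ * _)).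
- apply: eq_bigr => i _.
  rewrite take_rcons_le ?(ltnW (ltn_ord i)) // nth_rcons ltn_ord //.
- rewrite take_rcons_le // take_size nth_rcons ltnn eqxx //.
Qed.

Lemma run_prob_ge0 (s0 : bs n) h : 0 <= @run_prob R A n sel s0 h.
Proof.
rewrite /run_prob; apply: mulr_ge0; first by rewrite invr_ge0 exprn_ge0 // ler0n.
apply: prodr_ge0 => i _; apply: mulr_ge0; last exact: (mut_ge0 _ n1).
by have [S0 _] := Hv s0 (take i h); apply: S0.
Qed.

Lemma Acov_rcons t (s0 : bs n) h r : size h = t ->
  Acov t.+1 s0 (rcons h r) = Acov t s0 h && ~~ covers (update (pop s0 h) r.2).
Proof.
move=> sh; rewrite /Acov.
apply/forallP/andP => [H|[/forallP H1 H2] i].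
- split.
  + apply/forallP => i; have := H (widen_ord (leqnSn _) i) => /=.
    by rewrite take_rcons_le // sh -ltnS ltn_ord.
  + have := H ord_max => /=; by rewrite -sh -(size_rcons h r) take_size pop_rcons.
- case: (ltnP i t.+1) => hi.
  + have := H1 (Ordinal hi) => /=; by rewrite take_rcons_le // sh -ltnS.
  + have -> : nat_of_ord i = t.+1 by have := ltn_ord i; lia.
    by rewrite -sh -(size_rcons h r) take_size pop_rcons.
Qed.

Lemma Acov_last t (s0 : bs n) h : size h = t -> Acov t s0 h -> ~~ covers (pop s0 h).
Proof.
move=> sh /forallP /(_ ord_max) /=; by rewrite -sh take_size.
Qed.

Lemma G_ge0 t : 0 <= G t.
Proof.
apply: sumr_ge0 => s0 _; apply: sumr_ge0 => h _; case: ifP => // _.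
apply: mulr_ge0; [exact: run_prob_ge0 | exact: Phi_ge0].
Qed.

Lemma G_step t : G t.+1 + p * qq R n * @tail_prob R A n sel t <= G t.
Proof.
rewrite /G /tail_prob mulr_sumr -big_split /=; apply: ler_sum => s0 _.
rewrite (@sum_tuple_rcons R _ t (fun h : seq (bs n * bs n) =>
  if Acov t.+1 s0 h then @run_prob R A n sel s0 h * Phi R (pop s0 h) else 0)) mulr_sumr -big_split /=; apply: ler_sum => h _.
have sh := size_tuple h.
change [forall i : 'I_t.+1, ~~ covers (pop s0 (take i h))] with (Acov t s0 h).
under eq_bigr => r _ do rewrite Acov_rcons // run_prob_rcons pop_rcons.
case Ha: (Acov t s0 h) => /=; last by rewrite big1 ?mulr0 ?addr0.
apply: (le_trans (y := @run_prob R A n sel s0 h *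
   (\sum_(r : bs n * bs n) sel s0 h r.1 * mutprob R A r.1 r.2 *
      Phi R (update (pop s0 h) r.2) + p * qq R n))); last first.
  apply: ler_wpM2l; first exact: run_prob_ge0.
  by apply: drift => //; exact: (Acov_last sh Ha).
rewrite mulrDr [X in _ <= _ + X]mulrC lerD2r mulr_sumr.
apply: ler_sum => r _; case: ifP => _; last first.
  apply: mulr_ge0; first exact: run_prob_ge0.
  apply: mulr_ge0; last exact: Phi_ge0.
  apply: mulr_ge0; last exact: (mut_ge0 _ n1).
  by have [S0 _] := Hv s0 h; apply: S0.
by rewrite !mulrA.
Qed.

Lemma G_tele N : p * qq R n * \sum_(t < N) @tail_prob R A n sel t <= G 0 - G N.
Proof.
elim: N => [|N IH]; first by rewrite big_ord0 mulr0 subrr.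
rewrite big_ord_recr /= mulrDr.
have := G_step N; lra.
Qed.

Lemma G0_le : G 0 <= Phimax R n.
Proof.
rewrite /G.
apply: (le_trans (y := \sum_(s0 : bs n) \sum_(h : 0.-tuple (bs n * bs n))
   ((2%:R ^+ n)^-1 * Phimax R n))).
  apply: ler_sum => s0 _; apply: ler_sum => h _.
  have -> : @run_prob R A n sel s0 h = (2%:R ^+ n)^-1.
    by rewrite /run_prob size_tuple big_ord0 mulr1.
  case: ifP => _; last by apply: mulr_ge0; [rewrite invr_ge0 exprn_ge0 // ler0n | exact: Phimax_ge0].
  by apply: ler_wpM2l; [rewrite invr_ge0 exprn_ge0 // ler0n | exact: Phi_le_max].
rewrite !sumr_const card_tuple /= expn0 card_ffun card_bool card_ord.
rewrite mulr1n -(mulr_natr (_ * Phimax R n) (2 ^ n)) mulrAC natrX mulVf ?mul1r //.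

Qed.

End Run.
Section NumB.
Variable R : realType.

Lemma expR_half_le2 : expR (2%:R^-1) <= 2 :> R.
Proof.
have h1 := expR_ge1Dx (- 2%:R^-1 : R).
rewrite expRN in h1.
have hp : 0 < expR (2%:R^-1 : R) by apply: expR_gt0.
have h2 : (2%:R^-1 : R) <= (expR (2%:R^-1))^-1 by move: h1; rewrite -[X in X <= _ -> _]/(1 - 2%:R^-1); lra.
rewrite lef_pV2 ?posrE // in h2; lra.
Qed.

Lemma expR1_le4 : expR 1 <= 4 :> R.
Proof.
have -> : (1 : R) = 2%:R * 2%:R^-1 by rewrite divff.
rewrite expRM_natl.
have hp : 0 < expR (2%:R^-1 : R) by apply: expR_gt0.
have := expR_half_le2; nra.
Qed.

Lemma ln2_ge : 2%:R^-1 <= ln (2 : R).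
Proof.
rewrite -[X in X <= _](expRK (2%:R^-1 : R)).
by rewrite ler_ln ?posrE ?expR_gt0 // expR_half_le2.
Qed.

Lemma ln_step (m : nat) : (1 <= m)%N ->
  (m.+1%:R : R)^-1 <= ln (m.+1%:R : R) - ln (m%:R : R).
Proof.
move=> m1.
have hm : (0 : R) < m%:R by rewrite ltr0n.
have hm1 : (0 : R) < m.+1%:R by rewrite ltr0n.
have h := @le_ln1Dx R (- (m.+1%:R)^-1).
have hx : -1 < - (m.+1%:R : R)^-1.
  rewrite ltrN2 invf_lt1 // ltr1n; lia.
have E : 1 + - (m.+1%:R : R)^-1 = m%:R / m.+1%:R.
  by rewrite -[m.+1]addn1 natrD; field; rewrite natr1 pnatr_eq0.
move: (h hx); rewrite E ln_div ?posrE // => H.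
move: H; set c := (m.+1%:R : R)^-1; set a := ln (m.+1%:R : R); set b := ln (m%:R : R) => H; lra.
Qed.

Lemma harm (m : nat) : (1 <= m)%N ->
  \sum_(k < m) (k.+1%:R : R)^-1 <= 1 + ln (m%:R : R).
Proof.
case: m => // m _; elim: m => [|m IH].
  by rewrite big_ord1 ln1 addr0 invr1.
rewrite big_ord_recr /=.
have := ln_step (m := m.+1) isT; move: IH.
set S := \sum_(i < m.+1) _; set a := ln _; set b := ln _; set c := _^-1.
move=> H1 H2; lra.
Qed.

Lemma Phimax_le (n : nat) : (2 <= n)%N -> Phimax R n <= 8 * ln (n%:R : R).
Proof.
move=> n2.
have E : Phimax R n = 2 * \sum_(k < n.+1) (k.+1%:R : R)^-1.
  rewrite /Phimax /term big_split /= mulr2n mulrDl mul1r; congr (_ + _).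
  rewrite (reindex_inj rev_ord_inj) /=; apply: eq_bigr => k _.
  by rewrite subSS subKn // -ltnS.
rewrite E.
have H := harm (m := n.+1) isT.
have hl2 := ln2_ge.
have hn : (0 : R) < n%:R by rewrite ltr0n; lia.
have h2n : ln (n.+1%:R : R) <= ln 2 + ln (n%:R).
  rewrite -lnM ?posrE // ler_ln ?posrE ?mulr_gt0 //.
  by rewrite -natrM ler_nat; lia.
have h2n' : ln (2 : R) <= ln (n%:R).
  by rewrite ler_ln ?posrE // ler_nat.
lra.
Qed.

Lemma qq_ge (n : nat) : (2 <= n)%N -> (4 * n%:R)^-1 <= qq R n.
Proof.
move=> n2; rewrite /qq.
case: n n2 => [|m] // m2; rewrite succnK.
have hm : (0 : R) < m%:R by rewrite ltr0n; lia.
have E : 1 - (m.+1%:R : R)^-1 = (1 + (m%:R)^-1)^-1.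
  by rewrite -[m.+1]addn1 natrD; field; rewrite gt_eqF // natr1 pnatr_eq0.
rewrite E exprVn.
have hb : (1 + (m%:R : R)^-1) ^+ m <= 4.
  apply: (le_trans (y := expR ((m%:R : R)^-1) ^+ m)).
    by apply: lerXn2r; rewrite ?nnegrE ?expR_ge0 ?addr_ge0 ?invr_ge0 ?ler0n // expR_ge1Dx.
  by rewrite -expRM_natl mulfV ?gt_eqF // expR1_le4.
have hp : 0 < (1 + (m%:R : R)^-1) ^+ m by apply: exprn_gt0; rewrite addr_gt0 ?invr_gt0.
rewrite invfM mulrC; apply: ler_wpM2l; first by rewrite invr_ge0 ler0n.
by rewrite lef_pV2 ?posrE.
Qed.

End NumB.
Lemma tail_ge0 (R : realType) (A : algo) (n : nat) (sel : bs n -> seq (bs n * bs n) -> bs n -> R) t :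
  (1 <= n)%N -> valid_sel sel -> 0 <= @tail_prob R A n sel t.
Proof.
move=> n1 Hv; apply: sumr_ge0 => s0 _; apply: sumr_ge0 => h _; case: ifP => // _.
exact: run_prob_ge0.
Qed.

Theorem lemma5 :
  exists C : nat, forall (R : realType) (A : algo) (n : nat) (p : R)
    (sel : bs n -> seq (bs n * bs n) -> bs n -> R),
    (2 <= n)%N -> 0 < p ->
    valid_sel sel -> good_sel sel p ->
    expected_time_le A sel (C%:R * (n%:R * ln (n%:R : R)) / p).
Proof.
exists 32%N => R A n p sel n2 p0 Hv Hg N.
have n1 : (1 <= n)%N by lia.
have T := @G_tele R A n n1 sel p Hv Hg N.
have T0 := @G_ge0 R A n n1 sel Hv N.
have T1 := @G0_le R A n sel.
have T2 := Phimax_le R n2.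
have Q := qq_ge R n2.
have S0 : 0 <= \sum_(t < N) @tail_prob R A n sel t.
  by apply: sumr_ge0 => t _; apply: tail_ge0.
move: T T0 T1 T2 Q S0.
set S := \sum_(t < N) _; set q := qq R n; set L := ln _; set g0 := G _ _ 0; set gN := G _ _ N.
move=> T T0 T1 T2 Q S0.
have hn : (0 : R) < n%:R by rewrite ltr0n; lia.
have h4n : (0 : R) < 4 * n%:R by rewrite mulr_gt0.
have H1 : p * q * S <= 8 * L by lra.
have H2 : S * p / (4 * n%:R) <= 8 * L.
  apply: le_trans H1.
  have -> : p * q * S = (S * p) * q by ring.
  by apply: ler_wpM2l => //; rewrite mulr_ge0 // ltW.
rewrite /S ler_pdivlMr //.
rewrite ler_pdivrMr // in H2.
apply: (le_trans H2); rewrite le_eqVlt; apply/orP; left; apply/eqP.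
rewrite (_ : 32%:R = 8 * 4 :> R); last by rewrite -natrM.
ring.
Qed.
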